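(* Let $K$ be a field of characteristic $0$, let $L=\mathcal{L}(x,y)$ be the free Lie algebra over $K$ freely generated by $x,y$, let $\delta$ be the derivation of $L$ with $\delta(x)=0$, $\delta(y)=x$, and $L^\delta=\ker\delta$. If $f\in L^\delta$ is a nonzero element of degree at most $5$, then $f$ belongs to the Lie subalgebra of $L$ generated by $x$ and $[y,x]$. *)

(* Defs.v *)
From mathcomp Require Import all_boot all_order all_algebra.
Set Implicit Arguments. Unset Strict Implicit. Unset Printing Implicit Defensive.
Import GRing.Theory.
Local Open Scope ring_scope.

(* Words in the two letters: false = x, true = y. *)
Definition word := seq bool.

(* Noncommutative formal power series K<<x,y>> : coefficient functions on words.
   The free associative algebra K<x,y> (the universal enveloping algebra of the
   free Lie algebra L(x,y)) sits inside, and L(x,y) is realized as the Lie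
   subalgebra generated by x and y (Lie polynomials). *)
Definition series (K : fieldType) := word -> K.

Section Series.
Variable K : fieldType.

Definition szero : series K := fun _ => 0.
Definition sadd (f g : series K) : series K := fun w => f w + g w.
Definition sscale (c : K) (f : series K) : series K := fun w => c * f w.

Definition smul (f g : series K) : series K :=
  fun w => \sum_(i < (size w).+1) f (take i w) * g (drop i w).

Definition sbracket (f g : series K) : series K :=
  fun w => smul f g w - smul g f w.

Definition sX : series K := fun w => (w == [:: false])%:R.
Definition sY : series K := fun w => (w == [:: true])%:R.

Inductive lie_span (S : series K -> Prop) : series K -> Prop :=
| ls_gen f : S f -> lie_span S f
| ls_zero : lie_span S szero
| ls_add f g : lie_span S f -> lie_span S g -> lie_span S (sadd f g)
| ls_scale c f : lie_span S f -> lie_span S (sscale c f)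
| ls_bracket f g : lie_span S f -> lie_span S g -> lie_span S (sbracket f g).

Definition free_lie (f : series K) : Prop :=
  lie_span (fun g => g = sX \/ g = sY) f.

(* The derivation delta with delta(x) = 0, delta(y) = x, extended as a
   derivation of the associative algebra: on a word it sums over the
   occurrences of y, replacing each by x.  Coefficientwise: *)
Definition sdelta (f : series K) : series K :=
  fun w => \sum_(i < size w | nth true w i == false) f (set_nth false w i true).

Definition deg_le (d : nat) (f : series K) : Prop :=
  forall w : word, (d < size w)%N -> f w = 0.

End Series.

(* Main.v *)
Require Import Defs.
From mathcomp Require Import all_boot all_order all_algebra.
From mathcomp Require Import ring zify.
From Stdlib Require Import FunctionalExtensionality.
Set Implicit Arguments. Unset Strict Implicit. Unset Printing Implicit Defensive.
Import GRing.Theory.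
Local Open Scope ring_scope.

Definition iser := word -> int.
Definition isum (s : seq nat) (F : nat -> int) : int := foldr (fun i acc => F i + acc) 0 s.
Definition imul (f g : iser) : iser :=
  fun w => isum (iota 0 (size w).+1) (fun i => f (take i w) * g (drop i w)).
Definition ibr (f g : iser) : iser := fun w => imul f g w - imul g f w.
Definition idelta (f : iser) : iser :=
  fun w => isum (iota 0 (size w)) (fun i => if nth true w i == false then f (set_nth false w i true) else 0).
Definition ix : iser := fun w => Posz (w == [:: false]).
Definition iy : iser := fun w => Posz (w == [:: true]).
Definition iu := ibr iy ix.
Definition iux := ibr iu ix.
Definition iuy := ibr iu iy.
Definition iuxx := ibr iux ix.
Definition iuyy := ibr iuy iy.
Definition blist : seq iser := [:: ix; iy; iu; iux; iuy; iuxx; ibr iux iy; iuyy;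
   ibr iuxx ix; ibr iu iux; ibr iuxx iy; ibr (ibr iux iy) iy; ibr iu iuy; ibr iuyy iy].
Definition bI (k : nat) : iser := nth (fun _ => 0) blist k.
Fixpoint words (n : nat) : seq word :=
  if n is n'.+1 then [seq b :: w | b <- [:: false; true], w <- words n'] else [:: [::]].
Definition W5 : seq word := flatten [seq words n | n <- iota 0 6].
Definition Ttab : seq (seq (seq int)) := [::
  [::[::Posz 0;Posz 0;Posz 0;Posz 0;Posz 0;Posz 0;Posz 0;Posz 0;Posz 0;Posz 0;Posz 0;Posz 0;Posz 0;Posz 0];
    [::Posz 0;Posz 0;Negz 0;Posz 0;Posz 0;Posz 0;Posz 0;Posz 0;Posz 0;Posz 0;Posz 0;Posz 0;Posz 0;Posz 0];
    [::Posz 0;Posz 0;Posz 0;Negz 0;Posz 0;Posz 0;Posz 0;Posz 0;Posz 0;Posz 0;Posz 0;Posz 0;Posz 0;Posz 0];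
    [::Posz 0;Posz 0;Posz 0;Posz 0;Posz 0;Negz 0;Posz 0;Posz 0;Posz 0;Posz 0;Posz 0;Posz 0;Posz 0;Posz 0];
    [::Posz 0;Posz 0;Posz 0;Posz 0;Posz 0;Posz 0;Negz 0;Posz 0;Posz 0;Posz 0;Posz 0;Posz 0;Posz 0;Posz 0];
    [::Posz 0;Posz 0;Posz 0;Posz 0;Posz 0;Posz 0;Posz 0;Posz 0;Negz 0;Posz 0;Posz 0;Posz 0;Posz 0;Posz 0];
    [::Posz 0;Posz 0;Posz 0;Posz 0;Posz 0;Posz 0;Posz 0;Posz 0;Posz 0;Posz 1;Negz 0;Posz 0;Posz 0;Posz 0];
    [::Posz 0;Posz 0;Posz 0;Posz 0;Posz 0;Posz 0;Posz 0;Posz 0;Posz 0;Posz 0;Posz 0;Negz 0;Posz 1;Posz 0];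
    [::Posz 0;Posz 0;Posz 0;Posz 0;Posz 0;Posz 0;Posz 0;Posz 0;Posz 0;Posz 0;Posz 0;Posz 0;Posz 0;Posz 0];
    [::Posz 0;Posz 0;Posz 0;Posz 0;Posz 0;Posz 0;Posz 0;Posz 0;Posz 0;Posz 0;Posz 0;Posz 0;Posz 0;Posz 0];
    [::Posz 0;Posz 0;Posz 0;Posz 0;Posz 0;Posz 0;Posz 0;Posz 0;Posz 0;Posz 0;Posz 0;Posz 0;Posz 0;Posz 0];
    [::Posz 0;Posz 0;Posz 0;Posz 0;Posz 0;Posz 0;Posz 0;Posz 0;Posz 0;Posz 0;Posz 0;Posz 0;Posz 0;Posz 0];
    [::Posz 0;Posz 0;Posz 0;Posz 0;Posz 0;Posz 0;Posz 0;Posz 0;Posz 0;Posz 0;Posz 0;Posz 0;Posz 0;Posz 0];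
    [::Posz 0;Posz 0;Posz 0;Posz 0;Posz 0;Posz 0;Posz 0;Posz 0;Posz 0;Posz 0;Posz 0;Posz 0;Posz 0;Posz 0]];
  [::[::Posz 0;Posz 0;Posz 1;Posz 0;Posz 0;Posz 0;Posz 0;Posz 0;Posz 0;Posz 0;Posz 0;Posz 0;Posz 0;Posz 0];
    [::Posz 0;Posz 0;Posz 0;Posz 0;Posz 0;Posz 0;Posz 0;Posz 0;Posz 0;Posz 0;Posz 0;Posz 0;Posz 0;Posz 0];
    [::Posz 0;Posz 0;Posz 0;Posz 0;Negz 0;Posz 0;Posz 0;Posz 0;Posz 0;Posz 0;Posz 0;Posz 0;Posz 0;Posz 0];
    [::Posz 0;Posz 0;Posz 0;Posz 0;Posz 0;Posz 0;Negz 0;Posz 0;Posz 0;Posz 0;Posz 0;Posz 0;Posz 0;Posz 0];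
    [::Posz 0;Posz 0;Posz 0;Posz 0;Posz 0;Posz 0;Posz 0;Negz 0;Posz 0;Posz 0;Posz 0;Posz 0;Posz 0;Posz 0];
    [::Posz 0;Posz 0;Posz 0;Posz 0;Posz 0;Posz 0;Posz 0;Posz 0;Posz 0;Posz 0;Negz 0;Posz 0;Posz 0;Posz 0];
    [::Posz 0;Posz 0;Posz 0;Posz 0;Posz 0;Posz 0;Posz 0;Posz 0;Posz 0;Posz 0;Posz 0;Negz 0;Posz 0;Posz 0];
    [::Posz 0;Posz 0;Posz 0;Posz 0;Posz 0;Posz 0;Posz 0;Posz 0;Posz 0;Posz 0;Posz 0;Posz 0;Posz 0;Negz 0];
    [::Posz 0;Posz 0;Posz 0;Posz 0;Posz 0;Posz 0;Posz 0;Posz 0;Posz 0;Posz 0;Posz 0;Posz 0;Posz 0;Posz 0];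
    [::Posz 0;Posz 0;Posz 0;Posz 0;Posz 0;Posz 0;Posz 0;Posz 0;Posz 0;Posz 0;Posz 0;Posz 0;Posz 0;Posz 0];
    [::Posz 0;Posz 0;Posz 0;Posz 0;Posz 0;Posz 0;Posz 0;Posz 0;Posz 0;Posz 0;Posz 0;Posz 0;Posz 0;Posz 0];
    [::Posz 0;Posz 0;Posz 0;Posz 0;Posz 0;Posz 0;Posz 0;Posz 0;Posz 0;Posz 0;Posz 0;Posz 0;Posz 0;Posz 0];
    [::Posz 0;Posz 0;Posz 0;Posz 0;Posz 0;Posz 0;Posz 0;Posz 0;Posz 0;Posz 0;Posz 0;Posz 0;Posz 0;Posz 0];
    [::Posz 0;Posz 0;Posz 0;Posz 0;Posz 0;Posz 0;Posz 0;Posz 0;Posz 0;Posz 0;Posz 0;Posz 0;Posz 0;Posz 0]];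
  [::[::Posz 0;Posz 0;Posz 0;Posz 1;Posz 0;Posz 0;Posz 0;Posz 0;Posz 0;Posz 0;Posz 0;Posz 0;Posz 0;Posz 0];
    [::Posz 0;Posz 0;Posz 0;Posz 0;Posz 1;Posz 0;Posz 0;Posz 0;Posz 0;Posz 0;Posz 0;Posz 0;Posz 0;Posz 0];
    [::Posz 0;Posz 0;Posz 0;Posz 0;Posz 0;Posz 0;Posz 0;Posz 0;Posz 0;Posz 0;Posz 0;Posz 0;Posz 0;Posz 0];
    [::Posz 0;Posz 0;Posz 0;Posz 0;Posz 0;Posz 0;Posz 0;Posz 0;Posz 0;Posz 1;Posz 0;Posz 0;Posz 0;Posz 0];
    [::Posz 0;Posz 0;Posz 0;Posz 0;Posz 0;Posz 0;Posz 0;Posz 0;Posz 0;Posz 0;Posz 0;Posz 0;Posz 1;Posz 0];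
    [::Posz 0;Posz 0;Posz 0;Posz 0;Posz 0;Posz 0;Posz 0;Posz 0;Posz 0;Posz 0;Posz 0;Posz 0;Posz 0;Posz 0];
    [::Posz 0;Posz 0;Posz 0;Posz 0;Posz 0;Posz 0;Posz 0;Posz 0;Posz 0;Posz 0;Posz 0;Posz 0;Posz 0;Posz 0];
    [::Posz 0;Posz 0;Posz 0;Posz 0;Posz 0;Posz 0;Posz 0;Posz 0;Posz 0;Posz 0;Posz 0;Posz 0;Posz 0;Posz 0];
    [::Posz 0;Posz 0;Posz 0;Posz 0;Posz 0;Posz 0;Posz 0;Posz 0;Posz 0;Posz 0;Posz 0;Posz 0;Posz 0;Posz 0];
    [::Posz 0;Posz 0;Posz 0;Posz 0;Posz 0;Posz 0;Posz 0;Posz 0;Posz 0;Posz 0;Posz 0;Posz 0;Posz 0;Posz 0];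
    [::Posz 0;Posz 0;Posz 0;Posz 0;Posz 0;Posz 0;Posz 0;Posz 0;Posz 0;Posz 0;Posz 0;Posz 0;Posz 0;Posz 0];
    [::Posz 0;Posz 0;Posz 0;Posz 0;Posz 0;Posz 0;Posz 0;Posz 0;Posz 0;Posz 0;Posz 0;Posz 0;Posz 0;Posz 0];
    [::Posz 0;Posz 0;Posz 0;Posz 0;Posz 0;Posz 0;Posz 0;Posz 0;Posz 0;Posz 0;Posz 0;Posz 0;Posz 0;Posz 0];
    [::Posz 0;Posz 0;Posz 0;Posz 0;Posz 0;Posz 0;Posz 0;Posz 0;Posz 0;Posz 0;Posz 0;Posz 0;Posz 0;Posz 0]];
  [::[::Posz 0;Posz 0;Posz 0;Posz 0;Posz 0;Posz 1;Posz 0;Posz 0;Posz 0;Posz 0;Posz 0;Posz 0;Posz 0;Posz 0];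
    [::Posz 0;Posz 0;Posz 0;Posz 0;Posz 0;Posz 0;Posz 1;Posz 0;Posz 0;Posz 0;Posz 0;Posz 0;Posz 0;Posz 0];
    [::Posz 0;Posz 0;Posz 0;Posz 0;Posz 0;Posz 0;Posz 0;Posz 0;Posz 0;Negz 0;Posz 0;Posz 0;Posz 0;Posz 0];
    [::Posz 0;Posz 0;Posz 0;Posz 0;Posz 0;Posz 0;Posz 0;Posz 0;Posz 0;Posz 0;Posz 0;Posz 0;Posz 0;Posz 0];
    [::Posz 0;Posz 0;Posz 0;Posz 0;Posz 0;Posz 0;Posz 0;Posz 0;Posz 0;Posz 0;Posz 0;Posz 0;Posz 0;Posz 0];
    [::Posz 0;Posz 0;Posz 0;Posz 0;Posz 0;Posz 0;Posz 0;Posz 0;Posz 0;Posz 0;Posz 0;Posz 0;Posz 0;Posz 0];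
    [::Posz 0;Posz 0;Posz 0;Posz 0;Posz 0;Posz 0;Posz 0;Posz 0;Posz 0;Posz 0;Posz 0;Posz 0;Posz 0;Posz 0];
    [::Posz 0;Posz 0;Posz 0;Posz 0;Posz 0;Posz 0;Posz 0;Posz 0;Posz 0;Posz 0;Posz 0;Posz 0;Posz 0;Posz 0];
    [::Posz 0;Posz 0;Posz 0;Posz 0;Posz 0;Posz 0;Posz 0;Posz 0;Posz 0;Posz 0;Posz 0;Posz 0;Posz 0;Posz 0];
    [::Posz 0;Posz 0;Posz 0;Posz 0;Posz 0;Posz 0;Posz 0;Posz 0;Posz 0;Posz 0;Posz 0;Posz 0;Posz 0;Posz 0];
    [::Posz 0;Posz 0;Posz 0;Posz 0;Posz 0;Posz 0;Posz 0;Posz 0;Posz 0;Posz 0;Posz 0;Posz 0;Posz 0;Posz 0];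
    [::Posz 0;Posz 0;Posz 0;Posz 0;Posz 0;Posz 0;Posz 0;Posz 0;Posz 0;Posz 0;Posz 0;Posz 0;Posz 0;Posz 0];
    [::Posz 0;Posz 0;Posz 0;Posz 0;Posz 0;Posz 0;Posz 0;Posz 0;Posz 0;Posz 0;Posz 0;Posz 0;Posz 0;Posz 0];
    [::Posz 0;Posz 0;Posz 0;Posz 0;Posz 0;Posz 0;Posz 0;Posz 0;Posz 0;Posz 0;Posz 0;Posz 0;Posz 0;Posz 0]];
  [::[::Posz 0;Posz 0;Posz 0;Posz 0;Posz 0;Posz 0;Posz 1;Posz 0;Posz 0;Posz 0;Posz 0;Posz 0;Posz 0;Posz 0];
    [::Posz 0;Posz 0;Posz 0;Posz 0;Posz 0;Posz 0;Posz 0;Posz 1;Posz 0;Posz 0;Posz 0;Posz 0;Posz 0;Posz 0];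
    [::Posz 0;Posz 0;Posz 0;Posz 0;Posz 0;Posz 0;Posz 0;Posz 0;Posz 0;Posz 0;Posz 0;Posz 0;Negz 0;Posz 0];
    [::Posz 0;Posz 0;Posz 0;Posz 0;Posz 0;Posz 0;Posz 0;Posz 0;Posz 0;Posz 0;Posz 0;Posz 0;Posz 0;Posz 0];
    [::Posz 0;Posz 0;Posz 0;Posz 0;Posz 0;Posz 0;Posz 0;Posz 0;Posz 0;Posz 0;Posz 0;Posz 0;Posz 0;Posz 0];
    [::Posz 0;Posz 0;Posz 0;Posz 0;Posz 0;Posz 0;Posz 0;Posz 0;Posz 0;Posz 0;Posz 0;Posz 0;Posz 0;Posz 0];
    [::Posz 0;Posz 0;Posz 0;Posz 0;Posz 0;Posz 0;Posz 0;Posz 0;Posz 0;Posz 0;Posz 0;Posz 0;Posz 0;Posz 0];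
    [::Posz 0;Posz 0;Posz 0;Posz 0;Posz 0;Posz 0;Posz 0;Posz 0;Posz 0;Posz 0;Posz 0;Posz 0;Posz 0;Posz 0];
    [::Posz 0;Posz 0;Posz 0;Posz 0;Posz 0;Posz 0;Posz 0;Posz 0;Posz 0;Posz 0;Posz 0;Posz 0;Posz 0;Posz 0];
    [::Posz 0;Posz 0;Posz 0;Posz 0;Posz 0;Posz 0;Posz 0;Posz 0;Posz 0;Posz 0;Posz 0;Posz 0;Posz 0;Posz 0];
    [::Posz 0;Posz 0;Posz 0;Posz 0;Posz 0;Posz 0;Posz 0;Posz 0;Posz 0;Posz 0;Posz 0;Posz 0;Posz 0;Posz 0];
    [::Posz 0;Posz 0;Posz 0;Posz 0;Posz 0;Posz 0;Posz 0;Posz 0;Posz 0;Posz 0;Posz 0;Posz 0;Posz 0;Posz 0];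
    [::Posz 0;Posz 0;Posz 0;Posz 0;Posz 0;Posz 0;Posz 0;Posz 0;Posz 0;Posz 0;Posz 0;Posz 0;Posz 0;Posz 0];
    [::Posz 0;Posz 0;Posz 0;Posz 0;Posz 0;Posz 0;Posz 0;Posz 0;Posz 0;Posz 0;Posz 0;Posz 0;Posz 0;Posz 0]];
  [::[::Posz 0;Posz 0;Posz 0;Posz 0;Posz 0;Posz 0;Posz 0;Posz 0;Posz 1;Posz 0;Posz 0;Posz 0;Posz 0;Posz 0];
    [::Posz 0;Posz 0;Posz 0;Posz 0;Posz 0;Posz 0;Posz 0;Posz 0;Posz 0;Posz 0;Posz 1;Posz 0;Posz 0;Posz 0];
    [::Posz 0;Posz 0;Posz 0;Posz 0;Posz 0;Posz 0;Posz 0;Posz 0;Posz 0;Posz 0;Posz 0;Posz 0;Posz 0;Posz 0];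
    [::Posz 0;Posz 0;Posz 0;Posz 0;Posz 0;Posz 0;Posz 0;Posz 0;Posz 0;Posz 0;Posz 0;Posz 0;Posz 0;Posz 0];
    [::Posz 0;Posz 0;Posz 0;Posz 0;Posz 0;Posz 0;Posz 0;Posz 0;Posz 0;Posz 0;Posz 0;Posz 0;Posz 0;Posz 0];
    [::Posz 0;Posz 0;Posz 0;Posz 0;Posz 0;Posz 0;Posz 0;Posz 0;Posz 0;Posz 0;Posz 0;Posz 0;Posz 0;Posz 0];
    [::Posz 0;Posz 0;Posz 0;Posz 0;Posz 0;Posz 0;Posz 0;Posz 0;Posz 0;Posz 0;Posz 0;Posz 0;Posz 0;Posz 0];
    [::Posz 0;Posz 0;Posz 0;Posz 0;Posz 0;Posz 0;Posz 0;Posz 0;Posz 0;Posz 0;Posz 0;Posz 0;Posz 0;Posz 0];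
    [::Posz 0;Posz 0;Posz 0;Posz 0;Posz 0;Posz 0;Posz 0;Posz 0;Posz 0;Posz 0;Posz 0;Posz 0;Posz 0;Posz 0];
    [::Posz 0;Posz 0;Posz 0;Posz 0;Posz 0;Posz 0;Posz 0;Posz 0;Posz 0;Posz 0;Posz 0;Posz 0;Posz 0;Posz 0];
    [::Posz 0;Posz 0;Posz 0;Posz 0;Posz 0;Posz 0;Posz 0;Posz 0;Posz 0;Posz 0;Posz 0;Posz 0;Posz 0;Posz 0];
    [::Posz 0;Posz 0;Posz 0;Posz 0;Posz 0;Posz 0;Posz 0;Posz 0;Posz 0;Posz 0;Posz 0;Posz 0;Posz 0;Posz 0];
    [::Posz 0;Posz 0;Posz 0;Posz 0;Posz 0;Posz 0;Posz 0;Posz 0;Posz 0;Posz 0;Posz 0;Posz 0;Posz 0;Posz 0];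
    [::Posz 0;Posz 0;Posz 0;Posz 0;Posz 0;Posz 0;Posz 0;Posz 0;Posz 0;Posz 0;Posz 0;Posz 0;Posz 0;Posz 0]];
  [::[::Posz 0;Posz 0;Posz 0;Posz 0;Posz 0;Posz 0;Posz 0;Posz 0;Posz 0;Negz 0;Posz 1;Posz 0;Posz 0;Posz 0];
    [::Posz 0;Posz 0;Posz 0;Posz 0;Posz 0;Posz 0;Posz 0;Posz 0;Posz 0;Posz 0;Posz 0;Posz 1;Posz 0;Posz 0];
    [::Posz 0;Posz 0;Posz 0;Posz 0;Posz 0;Posz 0;Posz 0;Posz 0;Posz 0;Posz 0;Posz 0;Posz 0;Posz 0;Posz 0];
    [::Posz 0;Posz 0;Posz 0;Posz 0;Posz 0;Posz 0;Posz 0;Posz 0;Posz 0;Posz 0;Posz 0;Posz 0;Posz 0;Posz 0];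
    [::Posz 0;Posz 0;Posz 0;Posz 0;Posz 0;Posz 0;Posz 0;Posz 0;Posz 0;Posz 0;Posz 0;Posz 0;Posz 0;Posz 0];
    [::Posz 0;Posz 0;Posz 0;Posz 0;Posz 0;Posz 0;Posz 0;Posz 0;Posz 0;Posz 0;Posz 0;Posz 0;Posz 0;Posz 0];
    [::Posz 0;Posz 0;Posz 0;Posz 0;Posz 0;Posz 0;Posz 0;Posz 0;Posz 0;Posz 0;Posz 0;Posz 0;Posz 0;Posz 0];
    [::Posz 0;Posz 0;Posz 0;Posz 0;Posz 0;Posz 0;Posz 0;Posz 0;Posz 0;Posz 0;Posz 0;Posz 0;Posz 0;Posz 0];
    [::Posz 0;Posz 0;Posz 0;Posz 0;Posz 0;Posz 0;Posz 0;Posz 0;Posz 0;Posz 0;Posz 0;Posz 0;Posz 0;Posz 0];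
    [::Posz 0;Posz 0;Posz 0;Posz 0;Posz 0;Posz 0;Posz 0;Posz 0;Posz 0;Posz 0;Posz 0;Posz 0;Posz 0;Posz 0];
    [::Posz 0;Posz 0;Posz 0;Posz 0;Posz 0;Posz 0;Posz 0;Posz 0;Posz 0;Posz 0;Posz 0;Posz 0;Posz 0;Posz 0];
    [::Posz 0;Posz 0;Posz 0;Posz 0;Posz 0;Posz 0;Posz 0;Posz 0;Posz 0;Posz 0;Posz 0;Posz 0;Posz 0;Posz 0];
    [::Posz 0;Posz 0;Posz 0;Posz 0;Posz 0;Posz 0;Posz 0;Posz 0;Posz 0;Posz 0;Posz 0;Posz 0;Posz 0;Posz 0];
    [::Posz 0;Posz 0;Posz 0;Posz 0;Posz 0;Posz 0;Posz 0;Posz 0;Posz 0;Posz 0;Posz 0;Posz 0;Posz 0;Posz 0]];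
  [::[::Posz 0;Posz 0;Posz 0;Posz 0;Posz 0;Posz 0;Posz 0;Posz 0;Posz 0;Posz 0;Posz 0;Posz 1;Negz 0;Posz 0];
    [::Posz 0;Posz 0;Posz 0;Posz 0;Posz 0;Posz 0;Posz 0;Posz 0;Posz 0;Posz 0;Posz 0;Posz 0;Posz 0;Posz 1];
    [::Posz 0;Posz 0;Posz 0;Posz 0;Posz 0;Posz 0;Posz 0;Posz 0;Posz 0;Posz 0;Posz 0;Posz 0;Posz 0;Posz 0];
    [::Posz 0;Posz 0;Posz 0;Posz 0;Posz 0;Posz 0;Posz 0;Posz 0;Posz 0;Posz 0;Posz 0;Posz 0;Posz 0;Posz 0];
    [::Posz 0;Posz 0;Posz 0;Posz 0;Posz 0;Posz 0;Posz 0;Posz 0;Posz 0;Posz 0;Posz 0;Posz 0;Posz 0;Posz 0];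
    [::Posz 0;Posz 0;Posz 0;Posz 0;Posz 0;Posz 0;Posz 0;Posz 0;Posz 0;Posz 0;Posz 0;Posz 0;Posz 0;Posz 0];
    [::Posz 0;Posz 0;Posz 0;Posz 0;Posz 0;Posz 0;Posz 0;Posz 0;Posz 0;Posz 0;Posz 0;Posz 0;Posz 0;Posz 0];
    [::Posz 0;Posz 0;Posz 0;Posz 0;Posz 0;Posz 0;Posz 0;Posz 0;Posz 0;Posz 0;Posz 0;Posz 0;Posz 0;Posz 0];
    [::Posz 0;Posz 0;Posz 0;Posz 0;Posz 0;Posz 0;Posz 0;Posz 0;Posz 0;Posz 0;Posz 0;Posz 0;Posz 0;Posz 0];
    [::Posz 0;Posz 0;Posz 0;Posz 0;Posz 0;Posz 0;Posz 0;Posz 0;Posz 0;Posz 0;Posz 0;Posz 0;Posz 0;Posz 0];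
    [::Posz 0;Posz 0;Posz 0;Posz 0;Posz 0;Posz 0;Posz 0;Posz 0;Posz 0;Posz 0;Posz 0;Posz 0;Posz 0;Posz 0];
    [::Posz 0;Posz 0;Posz 0;Posz 0;Posz 0;Posz 0;Posz 0;Posz 0;Posz 0;Posz 0;Posz 0;Posz 0;Posz 0;Posz 0];
    [::Posz 0;Posz 0;Posz 0;Posz 0;Posz 0;Posz 0;Posz 0;Posz 0;Posz 0;Posz 0;Posz 0;Posz 0;Posz 0;Posz 0];
    [::Posz 0;Posz 0;Posz 0;Posz 0;Posz 0;Posz 0;Posz 0;Posz 0;Posz 0;Posz 0;Posz 0;Posz 0;Posz 0;Posz 0]];
  [::[::Posz 0;Posz 0;Posz 0;Posz 0;Posz 0;Posz 0;Posz 0;Posz 0;Posz 0;Posz 0;Posz 0;Posz 0;Posz 0;Posz 0];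
    [::Posz 0;Posz 0;Posz 0;Posz 0;Posz 0;Posz 0;Posz 0;Posz 0;Posz 0;Posz 0;Posz 0;Posz 0;Posz 0;Posz 0];
    [::Posz 0;Posz 0;Posz 0;Posz 0;Posz 0;Posz 0;Posz 0;Posz 0;Posz 0;Posz 0;Posz 0;Posz 0;Posz 0;Posz 0];
    [::Posz 0;Posz 0;Posz 0;Posz 0;Posz 0;Posz 0;Posz 0;Posz 0;Posz 0;Posz 0;Posz 0;Posz 0;Posz 0;Posz 0];
    [::Posz 0;Posz 0;Posz 0;Posz 0;Posz 0;Posz 0;Posz 0;Posz 0;Posz 0;Posz 0;Posz 0;Posz 0;Posz 0;Posz 0];
    [::Posz 0;Posz 0;Posz 0;Posz 0;Posz 0;Posz 0;Posz 0;Posz 0;Posz 0;Posz 0;Posz 0;Posz 0;Posz 0;Posz 0];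
    [::Posz 0;Posz 0;Posz 0;Posz 0;Posz 0;Posz 0;Posz 0;Posz 0;Posz 0;Posz 0;Posz 0;Posz 0;Posz 0;Posz 0];
    [::Posz 0;Posz 0;Posz 0;Posz 0;Posz 0;Posz 0;Posz 0;Posz 0;Posz 0;Posz 0;Posz 0;Posz 0;Posz 0;Posz 0];
    [::Posz 0;Posz 0;Posz 0;Posz 0;Posz 0;Posz 0;Posz 0;Posz 0;Posz 0;Posz 0;Posz 0;Posz 0;Posz 0;Posz 0];
    [::Posz 0;Posz 0;Posz 0;Posz 0;Posz 0;Posz 0;Posz 0;Posz 0;Posz 0;Posz 0;Posz 0;Posz 0;Posz 0;Posz 0];
    [::Posz 0;Posz 0;Posz 0;Posz 0;Posz 0;Posz 0;Posz 0;Posz 0;Posz 0;Posz 0;Posz 0;Posz 0;Posz 0;Posz 0];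
    [::Posz 0;Posz 0;Posz 0;Posz 0;Posz 0;Posz 0;Posz 0;Posz 0;Posz 0;Posz 0;Posz 0;Posz 0;Posz 0;Posz 0];
    [::Posz 0;Posz 0;Posz 0;Posz 0;Posz 0;Posz 0;Posz 0;Posz 0;Posz 0;Posz 0;Posz 0;Posz 0;Posz 0;Posz 0];
    [::Posz 0;Posz 0;Posz 0;Posz 0;Posz 0;Posz 0;Posz 0;Posz 0;Posz 0;Posz 0;Posz 0;Posz 0;Posz 0;Posz 0]];
  [::[::Posz 0;Posz 0;Posz 0;Posz 0;Posz 0;Posz 0;Posz 0;Posz 0;Posz 0;Posz 0;Posz 0;Posz 0;Posz 0;Posz 0];
    [::Posz 0;Posz 0;Posz 0;Posz 0;Posz 0;Posz 0;Posz 0;Posz 0;Posz 0;Posz 0;Posz 0;Posz 0;Posz 0;Posz 0];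
    [::Posz 0;Posz 0;Posz 0;Posz 0;Posz 0;Posz 0;Posz 0;Posz 0;Posz 0;Posz 0;Posz 0;Posz 0;Posz 0;Posz 0];
    [::Posz 0;Posz 0;Posz 0;Posz 0;Posz 0;Posz 0;Posz 0;Posz 0;Posz 0;Posz 0;Posz 0;Posz 0;Posz 0;Posz 0];
    [::Posz 0;Posz 0;Posz 0;Posz 0;Posz 0;Posz 0;Posz 0;Posz 0;Posz 0;Posz 0;Posz 0;Posz 0;Posz 0;Posz 0];
    [::Posz 0;Posz 0;Posz 0;Posz 0;Posz 0;Posz 0;Posz 0;Posz 0;Posz 0;Posz 0;Posz 0;Posz 0;Posz 0;Posz 0];
    [::Posz 0;Posz 0;Posz 0;Posz 0;Posz 0;Posz 0;Posz 0;Posz 0;Posz 0;Posz 0;Posz 0;Posz 0;Posz 0;Posz 0];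
    [::Posz 0;Posz 0;Posz 0;Posz 0;Posz 0;Posz 0;Posz 0;Posz 0;Posz 0;Posz 0;Posz 0;Posz 0;Posz 0;Posz 0];
    [::Posz 0;Posz 0;Posz 0;Posz 0;Posz 0;Posz 0;Posz 0;Posz 0;Posz 0;Posz 0;Posz 0;Posz 0;Posz 0;Posz 0];
    [::Posz 0;Posz 0;Posz 0;Posz 0;Posz 0;Posz 0;Posz 0;Posz 0;Posz 0;Posz 0;Posz 0;Posz 0;Posz 0;Posz 0];
    [::Posz 0;Posz 0;Posz 0;Posz 0;Posz 0;Posz 0;Posz 0;Posz 0;Posz 0;Posz 0;Posz 0;Posz 0;Posz 0;Posz 0];
    [::Posz 0;Posz 0;Posz 0;Posz 0;Posz 0;Posz 0;Posz 0;Posz 0;Posz 0;Posz 0;Posz 0;Posz 0;Posz 0;Posz 0];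
    [::Posz 0;Posz 0;Posz 0;Posz 0;Posz 0;Posz 0;Posz 0;Posz 0;Posz 0;Posz 0;Posz 0;Posz 0;Posz 0;Posz 0];
    [::Posz 0;Posz 0;Posz 0;Posz 0;Posz 0;Posz 0;Posz 0;Posz 0;Posz 0;Posz 0;Posz 0;Posz 0;Posz 0;Posz 0]];
  [::[::Posz 0;Posz 0;Posz 0;Posz 0;Posz 0;Posz 0;Posz 0;Posz 0;Posz 0;Posz 0;Posz 0;Posz 0;Posz 0;Posz 0];
    [::Posz 0;Posz 0;Posz 0;Posz 0;Posz 0;Posz 0;Posz 0;Posz 0;Posz 0;Posz 0;Posz 0;Posz 0;Posz 0;Posz 0];
    [::Posz 0;Posz 0;Posz 0;Posz 0;Posz 0;Posz 0;Posz 0;Posz 0;Posz 0;Posz 0;Posz 0;Posz 0;Posz 0;Posz 0];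
    [::Posz 0;Posz 0;Posz 0;Posz 0;Posz 0;Posz 0;Posz 0;Posz 0;Posz 0;Posz 0;Posz 0;Posz 0;Posz 0;Posz 0];
    [::Posz 0;Posz 0;Posz 0;Posz 0;Posz 0;Posz 0;Posz 0;Posz 0;Posz 0;Posz 0;Posz 0;Posz 0;Posz 0;Posz 0];
    [::Posz 0;Posz 0;Posz 0;Posz 0;Posz 0;Posz 0;Posz 0;Posz 0;Posz 0;Posz 0;Posz 0;Posz 0;Posz 0;Posz 0];
    [::Posz 0;Posz 0;Posz 0;Posz 0;Posz 0;Posz 0;Posz 0;Posz 0;Posz 0;Posz 0;Posz 0;Posz 0;Posz 0;Posz 0];
    [::Posz 0;Posz 0;Posz 0;Posz 0;Posz 0;Posz 0;Posz 0;Posz 0;Posz 0;Posz 0;Posz 0;Posz 0;Posz 0;Posz 0];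
    [::Posz 0;Posz 0;Posz 0;Posz 0;Posz 0;Posz 0;Posz 0;Posz 0;Posz 0;Posz 0;Posz 0;Posz 0;Posz 0;Posz 0];
    [::Posz 0;Posz 0;Posz 0;Posz 0;Posz 0;Posz 0;Posz 0;Posz 0;Posz 0;Posz 0;Posz 0;Posz 0;Posz 0;Posz 0];
    [::Posz 0;Posz 0;Posz 0;Posz 0;Posz 0;Posz 0;Posz 0;Posz 0;Posz 0;Posz 0;Posz 0;Posz 0;Posz 0;Posz 0];
    [::Posz 0;Posz 0;Posz 0;Posz 0;Posz 0;Posz 0;Posz 0;Posz 0;Posz 0;Posz 0;Posz 0;Posz 0;Posz 0;Posz 0];
    [::Posz 0;Posz 0;Posz 0;Posz 0;Posz 0;Posz 0;Posz 0;Posz 0;Posz 0;Posz 0;Posz 0;Posz 0;Posz 0;Posz 0];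
    [::Posz 0;Posz 0;Posz 0;Posz 0;Posz 0;Posz 0;Posz 0;Posz 0;Posz 0;Posz 0;Posz 0;Posz 0;Posz 0;Posz 0]];
  [::[::Posz 0;Posz 0;Posz 0;Posz 0;Posz 0;Posz 0;Posz 0;Posz 0;Posz 0;Posz 0;Posz 0;Posz 0;Posz 0;Posz 0];
    [::Posz 0;Posz 0;Posz 0;Posz 0;Posz 0;Posz 0;Posz 0;Posz 0;Posz 0;Posz 0;Posz 0;Posz 0;Posz 0;Posz 0];
    [::Posz 0;Posz 0;Posz 0;Posz 0;Posz 0;Posz 0;Posz 0;Posz 0;Posz 0;Posz 0;Posz 0;Posz 0;Posz 0;Posz 0];
    [::Posz 0;Posz 0;Posz 0;Posz 0;Posz 0;Posz 0;Posz 0;Posz 0;Posz 0;Posz 0;Posz 0;Posz 0;Posz 0;Posz 0];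
    [::Posz 0;Posz 0;Posz 0;Posz 0;Posz 0;Posz 0;Posz 0;Posz 0;Posz 0;Posz 0;Posz 0;Posz 0;Posz 0;Posz 0];
    [::Posz 0;Posz 0;Posz 0;Posz 0;Posz 0;Posz 0;Posz 0;Posz 0;Posz 0;Posz 0;Posz 0;Posz 0;Posz 0;Posz 0];
    [::Posz 0;Posz 0;Posz 0;Posz 0;Posz 0;Posz 0;Posz 0;Posz 0;Posz 0;Posz 0;Posz 0;Posz 0;Posz 0;Posz 0];
    [::Posz 0;Posz 0;Posz 0;Posz 0;Posz 0;Posz 0;Posz 0;Posz 0;Posz 0;Posz 0;Posz 0;Posz 0;Posz 0;Posz 0];
    [::Posz 0;Posz 0;Posz 0;Posz 0;Posz 0;Posz 0;Posz 0;Posz 0;Posz 0;Posz 0;Posz 0;Posz 0;Posz 0;Posz 0];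
    [::Posz 0;Posz 0;Posz 0;Posz 0;Posz 0;Posz 0;Posz 0;Posz 0;Posz 0;Posz 0;Posz 0;Posz 0;Posz 0;Posz 0];
    [::Posz 0;Posz 0;Posz 0;Posz 0;Posz 0;Posz 0;Posz 0;Posz 0;Posz 0;Posz 0;Posz 0;Posz 0;Posz 0;Posz 0];
    [::Posz 0;Posz 0;Posz 0;Posz 0;Posz 0;Posz 0;Posz 0;Posz 0;Posz 0;Posz 0;Posz 0;Posz 0;Posz 0;Posz 0];
    [::Posz 0;Posz 0;Posz 0;Posz 0;Posz 0;Posz 0;Posz 0;Posz 0;Posz 0;Posz 0;Posz 0;Posz 0;Posz 0;Posz 0];
    [::Posz 0;Posz 0;Posz 0;Posz 0;Posz 0;Posz 0;Posz 0;Posz 0;Posz 0;Posz 0;Posz 0;Posz 0;Posz 0;Posz 0]];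
  [::[::Posz 0;Posz 0;Posz 0;Posz 0;Posz 0;Posz 0;Posz 0;Posz 0;Posz 0;Posz 0;Posz 0;Posz 0;Posz 0;Posz 0];
    [::Posz 0;Posz 0;Posz 0;Posz 0;Posz 0;Posz 0;Posz 0;Posz 0;Posz 0;Posz 0;Posz 0;Posz 0;Posz 0;Posz 0];
    [::Posz 0;Posz 0;Posz 0;Posz 0;Posz 0;Posz 0;Posz 0;Posz 0;Posz 0;Posz 0;Posz 0;Posz 0;Posz 0;Posz 0];
    [::Posz 0;Posz 0;Posz 0;Posz 0;Posz 0;Posz 0;Posz 0;Posz 0;Posz 0;Posz 0;Posz 0;Posz 0;Posz 0;Posz 0];
    [::Posz 0;Posz 0;Posz 0;Posz 0;Posz 0;Posz 0;Posz 0;Posz 0;Posz 0;Posz 0;Posz 0;Posz 0;Posz 0;Posz 0];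
    [::Posz 0;Posz 0;Posz 0;Posz 0;Posz 0;Posz 0;Posz 0;Posz 0;Posz 0;Posz 0;Posz 0;Posz 0;Posz 0;Posz 0];
    [::Posz 0;Posz 0;Posz 0;Posz 0;Posz 0;Posz 0;Posz 0;Posz 0;Posz 0;Posz 0;Posz 0;Posz 0;Posz 0;Posz 0];
    [::Posz 0;Posz 0;Posz 0;Posz 0;Posz 0;Posz 0;Posz 0;Posz 0;Posz 0;Posz 0;Posz 0;Posz 0;Posz 0;Posz 0];
    [::Posz 0;Posz 0;Posz 0;Posz 0;Posz 0;Posz 0;Posz 0;Posz 0;Posz 0;Posz 0;Posz 0;Posz 0;Posz 0;Posz 0];
    [::Posz 0;Posz 0;Posz 0;Posz 0;Posz 0;Posz 0;Posz 0;Posz 0;Posz 0;Posz 0;Posz 0;Posz 0;Posz 0;Posz 0];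
    [::Posz 0;Posz 0;Posz 0;Posz 0;Posz 0;Posz 0;Posz 0;Posz 0;Posz 0;Posz 0;Posz 0;Posz 0;Posz 0;Posz 0];
    [::Posz 0;Posz 0;Posz 0;Posz 0;Posz 0;Posz 0;Posz 0;Posz 0;Posz 0;Posz 0;Posz 0;Posz 0;Posz 0;Posz 0];
    [::Posz 0;Posz 0;Posz 0;Posz 0;Posz 0;Posz 0;Posz 0;Posz 0;Posz 0;Posz 0;Posz 0;Posz 0;Posz 0;Posz 0];
    [::Posz 0;Posz 0;Posz 0;Posz 0;Posz 0;Posz 0;Posz 0;Posz 0;Posz 0;Posz 0;Posz 0;Posz 0;Posz 0;Posz 0]];
  [::[::Posz 0;Posz 0;Posz 0;Posz 0;Posz 0;Posz 0;Posz 0;Posz 0;Posz 0;Posz 0;Posz 0;Posz 0;Posz 0;Posz 0];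
    [::Posz 0;Posz 0;Posz 0;Posz 0;Posz 0;Posz 0;Posz 0;Posz 0;Posz 0;Posz 0;Posz 0;Posz 0;Posz 0;Posz 0];
    [::Posz 0;Posz 0;Posz 0;Posz 0;Posz 0;Posz 0;Posz 0;Posz 0;Posz 0;Posz 0;Posz 0;Posz 0;Posz 0;Posz 0];
    [::Posz 0;Posz 0;Posz 0;Posz 0;Posz 0;Posz 0;Posz 0;Posz 0;Posz 0;Posz 0;Posz 0;Posz 0;Posz 0;Posz 0];
    [::Posz 0;Posz 0;Posz 0;Posz 0;Posz 0;Posz 0;Posz 0;Posz 0;Posz 0;Posz 0;Posz 0;Posz 0;Posz 0;Posz 0];
    [::Posz 0;Posz 0;Posz 0;Posz 0;Posz 0;Posz 0;Posz 0;Posz 0;Posz 0;Posz 0;Posz 0;Posz 0;Posz 0;Posz 0];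
    [::Posz 0;Posz 0;Posz 0;Posz 0;Posz 0;Posz 0;Posz 0;Posz 0;Posz 0;Posz 0;Posz 0;Posz 0;Posz 0;Posz 0];
    [::Posz 0;Posz 0;Posz 0;Posz 0;Posz 0;Posz 0;Posz 0;Posz 0;Posz 0;Posz 0;Posz 0;Posz 0;Posz 0;Posz 0];
    [::Posz 0;Posz 0;Posz 0;Posz 0;Posz 0;Posz 0;Posz 0;Posz 0;Posz 0;Posz 0;Posz 0;Posz 0;Posz 0;Posz 0];
    [::Posz 0;Posz 0;Posz 0;Posz 0;Posz 0;Posz 0;Posz 0;Posz 0;Posz 0;Posz 0;Posz 0;Posz 0;Posz 0;Posz 0];
    [::Posz 0;Posz 0;Posz 0;Posz 0;Posz 0;Posz 0;Posz 0;Posz 0;Posz 0;Posz 0;Posz 0;Posz 0;Posz 0;Posz 0];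
    [::Posz 0;Posz 0;Posz 0;Posz 0;Posz 0;Posz 0;Posz 0;Posz 0;Posz 0;Posz 0;Posz 0;Posz 0;Posz 0;Posz 0];
    [::Posz 0;Posz 0;Posz 0;Posz 0;Posz 0;Posz 0;Posz 0;Posz 0;Posz 0;Posz 0;Posz 0;Posz 0;Posz 0;Posz 0];
    [::Posz 0;Posz 0;Posz 0;Posz 0;Posz 0;Posz 0;Posz 0;Posz 0;Posz 0;Posz 0;Posz 0;Posz 0;Posz 0;Posz 0]]].
Definition Lam (k : nat) : seq (word * int) := match k with
  | 1 => [::([::false], Posz 1)]
  | 4 => [::([::false;false;true], Posz 1)]
  | 6 => [::([::false;false;false;true], Negz 0)]
  | 7 => [::([::false;false;true;true], Posz 1)]
  | 10 => [::([::false;false;false;false;true], Posz 1)]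
  | 11 => [::([::false;false;false;true;true], Negz 0)]
  | 12 => [::([::false;false;false;true;true], Posz 5);([::false;false;true;false;true], Posz 2)]
  | 13 => [::([::false;false;true;true;true], Posz 1)]
  | _ => [::] end.
Definition dk (k : nat) : nat := match k with
  | 1 => 1
  | 4 => 1
  | 6 => 1
  | 7 => 2
  | 10 => 1
  | 11 => 2
  | 12 => 2
  | 13 => 3
  | _ => 0 end.
Inductive trie := Leaf | Node of int & trie & trie.
Fixpoint tget (t : trie) (w : word) : int :=
  match t with
  | Leaf => 0
  | Node v l r => match w with [::] => v | b :: w' => tget (if b then r else l) w' end
  end.
Fixpoint tbuild (n : nat) (f : iser) : trie :=
  if n is n'.+1 then Node (f [::]) (tbuild n' (fun w => f (false :: w))) (tbuild n' (fun w => f (true :: w)))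
  else Node (f [::]) Leaf Leaf.
Definition tbr (t1 t2 : trie) : trie := tbuild 5 (ibr (tget t1) (tget t2)).
Definition tlist : seq trie :=
  let tx := tbuild 5 ix in let ty := tbuild 5 iy in
  let tu := tbr ty tx in let tux := tbr tu tx in let tuy := tbr tu ty in
  let tuxx := tbr tux tx in let tuxy := tbr tux ty in let tuyy := tbr tuy ty in
  [:: tx; ty; tu; tux; tuy; tuxx; tuxy; tuyy;
   tbr tuxx tx; tbr tu tux; tbr tuxx ty; tbr tuxy ty; tbr tu tuy; tbr tuyy ty].
Definition T (i j m : nat) : int := nth 0 (nth [::] (nth [::] Ttab i) j) m.
Definition table_ok (ts : seq trie) : bool :=
  all (fun i => all (fun j => all (fun w => ibr (tget (nth Leaf ts i)) (tget (nth Leaf ts j))  w == isum (iota 0 14) (fun m => T i j m * tget (nth Leaf ts m) w)) W5) (iota 0 14)) (iota 0 14).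
Lemma table_okT : table_ok tlist. Proof. vm_compute. reflexivity. Qed.
Definition nonker := [:: 1; 4; 6; 7; 10; 11; 12; 13]%N.
Definition lam_size_ok : bool :=
  all (fun k => all (fun p => size p.1 <= 5)%N (Lam k)) nonker.
Lemma lam_size_okT : lam_size_ok. Proof. by []. Qed.
Definition lam_ok (ts : seq trie) : bool :=
  all (fun k => all (fun j => foldr (fun p acc => p.2 * idelta (tget (nth Leaf ts j)) p.1 + acc) 0 (Lam k) == if j == k then Posz (dk k) else 0) (iota 0 14)) nonker.
Lemma lam_okT : lam_ok tlist. Proof. vm_compute. reflexivity. Qed.

Arguments tbuild : simpl never.
Arguments tbr : simpl never.
Arguments ibr : simpl never.

Definition agree5 (f g : iser) := forall w, (size w <= 5)%N -> f w = g w.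

Lemma tget_tbuild n f w : (size w <= n)%N -> tget (tbuild n f) w = f w.
Proof.
elim: n f w => [|n IH] f [|b w] //= Hs.
by case: b; rewrite IH.
Qed.

Lemma ibr_agree f f' g g' : agree5 f f' -> agree5 g g' -> agree5 (ibr f g) (ibr f' g').
Proof.
move=> Hf Hg w Hw; rewrite /ibr /imul.
have E : forall (a b a' b' : iser), agree5 a a' -> agree5 b b' ->
   isum (iota 0 (size w).+1) (fun i => a (take i w) * b (drop i w)) =
   isum (iota 0 (size w).+1) (fun i => a' (take i w) * b' (drop i w)).
  move=> a b a' b' Ha Hb; elim: (iota 0 _) => //= i s ->.
  rewrite Ha ?Hb //.
    by rewrite size_drop (leq_trans (leq_subr _ _) Hw).
  by rewrite size_take_min (leq_trans (geq_minr _ _) Hw).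
by rewrite (E _ _ _ _ Hf Hg) (E _ _ _ _ Hg Hf).
Qed.

Lemma agree_tbr t1 t2 f g : agree5 (tget t1) f -> agree5 (tget t2) g ->
  agree5 (tget (tbr t1 t2)) (ibr f g).
Proof.
move=> H1 H2 w Hw; rewrite /tbr tget_tbuild //.
exact: ibr_agree.
Qed.

Lemma agree_base f : agree5 (tget (tbuild 5 f)) f.
Proof. by move=> w Hw; rewrite tget_tbuild. Qed.

Lemma agree_tlist k : (k < 14)%N -> agree5 (tget (nth Leaf tlist k)) (bI k).
Proof.
rewrite /tlist /bI /blist.
do 14 (case: k => [_|k]; first by cbn beta iota zeta delta [nth]; rewrite /iuxx /iuyy /iux /iuy /iu; repeat apply: agree_tbr; apply: agree_base).
by [].
Qed.

Lemma mem_words w : w \in words (size w).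
Proof.
elim: w => [|b w IH] //=.
by case: b; rewrite /= !mem_cat (map_f _ IH) ?orbT.
Qed.

Lemma mem_W5 w : (size w <= 5)%N -> w \in W5.
Proof.
move=> Hw; apply/flatten_mapP; exists (size w); last exact: mem_words.
by rewrite mem_iota.
Qed.

Lemma table_int i j w : (i < 14)%N -> (j < 14)%N -> (size w <= 5)%N ->
  ibr (bI i) (bI j) w = isum (iota 0 14) (fun m => T i j m * bI m w).
Proof.
move=> Hi Hj Hw.
rewrite -(ibr_agree (agree_tlist Hi) (agree_tlist Hj) Hw).
have := table_okT; rewrite /table_ok => /allP /(_ i); rewrite mem_iota => /(_ Hi).
move=> /allP /(_ j); rewrite mem_iota => /(_ Hj) /allP /(_ w (mem_W5 Hw)) /eqP ->.
have : forall m, m \in iota 0 14 -> tget (nth Leaf tlist m) w = bI m w.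
  by move=> m; rewrite mem_iota => /andP[_ Hm]; apply: agree_tlist.
elim: (iota 0 14) => //= m s IH H.
by rewrite H ?inE ?eqxx // IH // => m' Hm'; apply: H; rewrite inE Hm' orbT.
Qed.

Definition supp (n : nat) (f : iser) := forall w, (n < size w)%N -> f w = 0.

Lemma isum0 s F : (forall i, F i = 0) -> isum s F = 0.
Proof. by move=> H; elim: s => //= i s ->; rewrite H. Qed.

Lemma isum_eq_in s F G : (forall i, i \in s -> F i = G i) -> isum s F = isum s G.
Proof.
elim: s => //= i s IH H; rewrite H ?inE ?eqxx // IH // => j Hj.
by apply: H; rewrite inE Hj orbT.
Qed.

Lemma imul_supp a b f g : supp a f -> supp b g -> supp (a + b) (imul f g).
Proof.
move=> Hf Hg w Hw; rewrite /imul; apply: isum0 => i.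
case: (leqP i a) => Hi.
  by rewrite (Hg (drop i w)) ?mulr0 // size_drop; lia.
by rewrite (Hf (take i w)) ?mul0r // size_take_min; lia.
Qed.

Lemma ibr_supp a b f g : supp a f -> supp b g -> supp (a + b) (ibr f g).
Proof.
move=> Hf Hg w Hw; rewrite /ibr (imul_supp Hf Hg) // (imul_supp Hg Hf) ?subr0 //.
by rewrite addnC.
Qed.

Lemma supp_mono a b f : supp a f -> (a <= b)%N -> supp b f.
Proof. by move=> H Hab w Hw; apply: H; apply: leq_ltn_trans Hw. Qed.

Lemma supp_x : supp 1 ix.
Proof. by move=> w Hw; rewrite /ix; case: eqP => // E; rewrite E in Hw. Qed.
Lemma supp_y : supp 1 iy.
Proof. by move=> w Hw; rewrite /iy; case: eqP => // E; rewrite E in Hw. Qed.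

Lemma supp_ker k : k \in [:: 0; 2; 3; 5; 8; 9]%N -> supp 5 (bI k).
Proof.
have su : supp 2 iu := ibr_supp supp_y supp_x.
have sux : supp 3 iux := ibr_supp su supp_x.
have suxx : supp 4 iuxx := ibr_supp sux supp_x.
rewrite !inE; case/orP=> [/eqP->|]; first exact: supp_mono supp_x _.
case/orP=> [/eqP->|]; first exact: supp_mono su _.
case/orP=> [/eqP->|]; first exact: supp_mono sux _.
case/orP=> [/eqP->|]; first exact: supp_mono suxx _.
case/orP=> [/eqP->|/eqP->]; first exact: (ibr_supp suxx supp_x).
exact: (ibr_supp su sux).
Qed.

Lemma idelta_agree f g w : agree5 f g -> (size w <= 5)%N -> idelta f w = idelta g w.
Proof.
move=> H Hw; rewrite /idelta; apply: isum_eq_in => i; rewrite mem_iota add0n => /andP[_ Hi].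
case: ifP => // _; apply: H; rewrite size_set_nth.
by rewrite (maxn_idPr Hi).
Qed.

Section Proofs.
Variable K : fieldType.
Definition toK (f : iser) : series K := fun w => (f w)%:~R.

Lemma cast_isum s F : (isum s F)%:~R = \sum_(i <- s) (F i)%:~R :> K.
Proof. elim: s => [|a s IH] /=; first by rewrite big_nil. by rewrite big_cons intrD IH. Qed.

Lemma sum_ord_iota (G : nat -> K) n : \sum_(i < n) G i = \sum_(i <- iota 0 n) G i.
Proof. by rewrite -(big_mkord xpredT) /index_iota subn0. Qed.

Lemma smul_toK f g w : smul (toK f) (toK g) w = (imul f g w)%:~R.
Proof.
rewrite /smul /imul cast_isum -sum_ord_iota; apply: eq_bigr => i _.
by rewrite intrM.
Qed.

Lemma sbr_toK f g : sbracket (toK f) (toK g) = toK (ibr f g).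
Proof.
apply: functional_extensionality => w.
by rewrite /sbracket /toK /ibr !smul_toK intrB.
Qed.

Lemma sdelta_toK f w : sdelta (toK f) w = (idelta f w)%:~R.
Proof.
rewrite /sdelta /idelta cast_isum big_mkcond -sum_ord_iota /=.
apply: eq_bigr => i _; rewrite /toK; by case: ifP.
Qed.

Lemma table_K i j w : (i < 14)%N -> (j < 14)%N -> (size w <= 5)%N ->
  sbracket (toK (bI i)) (toK (bI j)) w = \sum_(m < 14) (T i j m)%:~R * toK (bI m) w.
Proof.
move=> Hi Hj Hw; rewrite sbr_toK /toK table_int // cast_isum -sum_ord_iota.
by apply: eq_bigr => m _; rewrite intrM.
Qed.

Lemma smul_lin (g h : series K) (F : nat -> series K) (a b : nat -> K) w :
  (forall u, (size u <= size w)%N -> g u = \sum_(k < 14) a k * F k u) ->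
  (forall u, (size u <= size w)%N -> h u = \sum_(k < 14) b k * F k u) ->
  smul g h w = \sum_(k < 14) \sum_(l < 14) a k * b l * smul (F k) (F l) w.
Proof.
move=> Hg Hh; rewrite /smul.
transitivity (\sum_(i < (size w).+1) \sum_(k < 14) \sum_(l < 14)
    a k * b l * (F k (take i w) * F l (drop i w))).
  apply: eq_bigr => i _.
  rewrite Hg; last by rewrite size_take_min geq_minr.
  rewrite Hh; last by rewrite size_drop leq_subr.
  rewrite big_distrlr /=; apply: eq_bigr => k _; apply: eq_bigr => l _.
  by rewrite mulrACA.
rewrite exchange_big; apply: eq_bigr => k _; rewrite exchange_big.
by apply: eq_bigr => l _; rewrite mulr_sumr.
Qed.

Lemma sbr_lin (g h : series K) (a b : nat -> K) w : (size w <= 5)%N ->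
  (forall u, (size u <= 5)%N -> g u = \sum_(k < 14) a k * toK (bI k) u) ->
  (forall u, (size u <= 5)%N -> h u = \sum_(k < 14) b k * toK (bI k) u) ->
  sbracket g h w = \sum_(m < 14) (\sum_(k < 14) \sum_(l < 14) a k * b l * (T k l m)%:~R) * toK (bI m) w.
Proof.
move=> Hw Hg Hh.
have Hg' : forall u, (size u <= size w)%N -> g u = \sum_(k < 14) a k * toK (bI k) u.
  by move=> u Hu; apply: Hg; apply: leq_trans Hw.
have Hh' : forall u, (size u <= size w)%N -> h u = \sum_(k < 14) b k * toK (bI k) u.
  by move=> u Hu; apply: Hh; apply: leq_trans Hw.
rewrite /sbracket (@smul_lin g h (fun k => toK (bI k)) a b w Hg' Hh') (@smul_lin h g (fun k => toK (bI k)) b a w Hh' Hg') [X in _ - X]exchange_big -sumrB.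
transitivity (\sum_(k < 14) \sum_(l < 14) a k * b l * \sum_(m < 14) (T k l m)%:~R * toK (bI m) w).
  apply: eq_bigr => k _; rewrite -sumrB; apply: eq_big => // l _.
  rewrite -table_K //; rewrite /sbracket [b l * a k]mulrC mulrBr //.
transitivity (\sum_(k < 14) \sum_(m < 14) \sum_(l < 14) a k * b l * (T k l m)%:~R * toK (bI m) w).
  apply: eq_bigr => k _.
  transitivity (\sum_(l < 14) \sum_(m < 14) a k * b l * (T k l m)%:~R * toK (bI m) w).
    by apply: eq_bigr => l _; rewrite mulr_sumr; apply: eq_bigr => m _; rewrite mulrA.
  by rewrite exchange_big.
rewrite exchange_big; apply: eq_bigr => m _; rewrite mulr_suml; apply: eq_bigr => k _.
by rewrite mulr_suml.
Qed.

Definition repr5 (g : series K) :=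
  exists c : nat -> K, forall w, (size w <= 5)%N -> g w = \sum_(k < 14) c k * toK (bI k) w.

Lemma sum_delta (F : nat -> K) j : (j < 14)%N -> \sum_(k < 14) (k == j :> nat)%:R * F k = F j.
Proof.
move=> Hj; rewrite (bigD1 (Ordinal Hj)) //= eqxx mul1r big1 ?addr0 // => k Hk.
suff /negbTE -> : (k : nat) != j by rewrite mul0r.
by apply: contra Hk => /eqP Hkj; apply/eqP/val_inj.
Qed.

Lemma free_repr g : free_lie g -> repr5 g.
Proof.
elim => {g}.
- move=> f [->|->].
    by exists (fun k => (k == 0)%N%:R) => w _; rewrite (sum_delta (fun k => toK (bI k) w)).
  by exists (fun k => (k == 1)%N%:R) => w _; rewrite (sum_delta (fun k => toK (bI k) w)).
- by exists (fun _ => 0) => w _; rewrite big1 // => k _; rewrite mul0r.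
- move=> f g _ [a Ha] _ [b Hb]; exists (fun k => a k + b k) => w Hw.
  rewrite /sadd Ha // Hb // -big_split; apply: eq_bigr => k _; by rewrite mulrDl.
- move=> c f _ [a Ha]; exists (fun k => c * a k) => w Hw.
  rewrite /sscale Ha // mulr_sumr; apply: eq_bigr => k _; by rewrite mulrA.
- move=> f g _ [a Ha] _ [b Hb].
  exists (fun m => \sum_(k < 14) \sum_(l < 14) a k * b l * (T k l m)%:~R) => w Hw.
  exact: sbr_lin.
Qed.

Lemma delta_repr f (c : nat -> K) w :
  (forall u, (size u <= 5)%N -> f u = \sum_(k < 14) c k * toK (bI k) u) -> (size w <= 5)%N ->
  sdelta f w = \sum_(k < 14) c k * (idelta (tget (nth Leaf tlist k)) w)%:~R.
Proof.
move=> Hc Hw; rewrite /sdelta.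
transitivity (\sum_(i < size w | nth true w i == false) \sum_(k < 14) c k * toK (bI k) (set_nth false w i true)).
  apply: eq_bigr => i _; apply: Hc; rewrite size_set_nth (maxn_idPr (ltn_ord i)) //.
rewrite exchange_big; apply: eq_bigr => k _; rewrite -mulr_sumr.
by rewrite (idelta_agree (agree_tlist (ltn_ord k)) Hw) -sdelta_toK.
Qed.

Lemma cast_foldr (F : word -> int) (s : seq (word * int)) :
  (foldr (fun p acc => p.2 * F p.1 + acc) 0 s)%:~R = \sum_(p <- s) (p.2)%:~R * (F p.1)%:~R :> K.
Proof. elim: s => [|p s IH] /=; first by rewrite big_nil. by rewrite big_cons intrD intrM IH. Qed.

Hypothesis charK0 : [pchar K] =i pred0.

Lemma dk_neq0 k : k \in nonker -> (dk k)%:R != 0 :> K.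
Proof.
move=> Hk.
have : dk k \in [:: 1; 2; 3]%N by move: k Hk; apply/allP.
rewrite !inE => /orP[/eqP->|/orP[/eqP->|/eqP->]]; first exact: oner_neq0.
  by apply/negP => /eqP E; have := charK0 2; rewrite !inE /= E eqxx.
by apply/negP => /eqP E; have := charK0 3; rewrite !inE /= E eqxx.
Qed.

Lemma nonker_zero f (c : nat -> K) : sdelta f = szero K ->
  (forall u, (size u <= 5)%N -> f u = \sum_(k < 14) c k * toK (bI k) u) ->
  forall k, k \in nonker -> c k = 0.
Proof.
move=> Hd Hc k Hk.
have Hsz := lam_size_okT; have Hlam := lam_okT.
have Hk14 : (k < 14)%N by move: k Hk; apply/allP.
have E1 : \sum_(p <- Lam k) (p.2)%:~R * sdelta f p.1 = 0.
  by rewrite Hd big1 => [//|p _]; rewrite /szero mulr0.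
have E2 : \sum_(p <- Lam k) (p.2)%:~R * sdelta f p.1 = c k * (dk k)%:R.
  transitivity (\sum_(p <- Lam k) (p.2)%:~R *
      \sum_(j < 14) c j * (idelta (tget (nth Leaf tlist j)) p.1)%:~R).
    rewrite big_seq [RHS]big_seq; apply: eq_bigr => p Hp.
    have Hp5 : (size p.1 <= 5)%N by move/allP: Hsz => /(_ k Hk) /allP /(_ p Hp).
    by rewrite (delta_repr Hc Hp5).
  transitivity (\sum_(p <- Lam k) \sum_(j < 14) c j *
      ((p.2)%:~R * (idelta (tget (nth Leaf tlist j)) p.1)%:~R)).
    by apply: eq_bigr => p _; rewrite mulr_sumr; apply: eq_bigr => j _; rewrite mulrCA.
  rewrite exchange_big.
  transitivity (\sum_(j < 14) c j * (if (j : nat) == k then Posz (dk k) else 0)%:~R).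
    apply: eq_bigr => j _; rewrite -mulr_sumr -cast_foldr.
    move/allP: Hlam => /(_ k Hk) /allP /(_ j); rewrite mem_iota ltn_ord => /(_ isT) /eqP ->.
    by [].
  rewrite (bigD1 (Ordinal Hk14)); last by []. rewrite /= eqxx big1 ?addr0; first by []. move=> j Hj.
  suff /negbTE -> : (j : nat) != k by rewrite mulr0.
  by apply: contra Hj => /eqP Hjk; apply/eqP/val_inj.
move: E2; rewrite E1 => /esym /eqP; rewrite mulf_eq0 (negbTE (dk_neq0 Hk)) orbF.
by move/eqP.
Qed.

Definition Tg (g : series K) : Prop := g = sX K \/ g = sbracket (sY K) (sX K).

Lemma toK_x : toK ix = sX K.
Proof. by apply: functional_extensionality. Qed.
Lemma toK_y : toK iy = sY K.
Proof. by apply: functional_extensionality. Qed.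

Lemma ker_span k : k \in [:: 0; 2; 3; 5; 8; 9]%N -> lie_span Tg (toK (bI k)).
Proof.
have hx : lie_span Tg (toK ix) by rewrite toK_x; apply: ls_gen; left.
have hu : lie_span Tg (toK iu) by rewrite /iu -sbr_toK toK_x toK_y; apply: ls_gen; right.
have hux : lie_span Tg (toK iux) by rewrite /iux -sbr_toK; apply: ls_bracket.
have huxx : lie_span Tg (toK iuxx) by rewrite /iuxx -sbr_toK; apply: ls_bracket.
rewrite !inE; case/orP=> [/eqP->|]; first exact: hx.
case/orP=> [/eqP->|]; first exact: hu.
case/orP=> [/eqP->|]; first exact: hux.
case/orP=> [/eqP->|]; first exact: huxx.
case/orP=> [/eqP->|/eqP->]; rewrite /bI /= -sbr_toK; exact: ls_bracket.
Qed.

Lemma span_sum S (F : nat -> series K) (c : nat -> K) s :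
  (forall k, k \in s -> lie_span S (F k)) -> lie_span S (fun w => \sum_(k <- s) c k * F k w).
Proof.
elim: s => [|a s IH] H.
  have -> : (fun w => \sum_(k <- [::]) c k * F k w) = szero K.
    by apply: functional_extensionality => w; rewrite big_nil.
  exact: ls_zero.
have -> : (fun w => \sum_(k <- a :: s) c k * F k w) =
   sadd (sscale (c a) (F a)) (fun w => \sum_(k <- s) c k * F k w).
  by apply: functional_extensionality => w; rewrite big_cons.
apply: ls_add; first by apply: ls_scale; apply: H; rewrite inE eqxx.
by apply: IH => k Hk; apply: H; rewrite inE Hk orbT.
Qed.
End Proofs.

Unset Implicit Arguments.
Theorem proposition5p3 (K : fieldType) (charK0 : [pchar K] =i pred0)
  (f : series K) :
  free_lie f ->
  sdelta f = szero K ->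
  f <> szero K ->
  deg_le 5 f ->
  lie_span (fun g => g = sX K \/ g = sbracket (sY K) (sX K)) f.
Proof.
move=> Hf Hd _ Hdeg.
have [c Hc] := free_repr Hf.
have Hz := nonker_zero charK0 Hd Hc.
have -> : f = fun w => \sum_(k <- [:: 0; 2; 3; 5; 8; 9]%N) c k * toK K (bI k) w.
  apply: functional_extensionality => w.
  case: (leqP (size w) 5) => Hw.
    rewrite Hc // (sum_ord_iota (fun k => c k * toK K (bI k) w)) [iota 0 14]/= !big_cons !big_nil.
    rewrite (Hz 1) // (Hz 4) // (Hz 6) // (Hz 7) // (Hz 10) // (Hz 11) // (Hz 12) // (Hz 13) //.
    rewrite !mul0r !add0r !addr0.
    ring.
  rewrite Hdeg // big1_seq // => k /andP[_ Hk].
  by rewrite /toK (supp_ker Hk Hw) mulr0.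
apply: span_sum => k Hk; exact: ker_span.
Qed.
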